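(* Let $(X,\mu)$ be a probability measure space, $0<q<1$, $w:X\to[0,\infty)$ measurable, and for each $n\in\mathbb{N}$ let $X_n\subseteq X$ be measurable and $w_n:X_n\to\mathbb{R}^+$ measurable with $w_n\ge w$ on $X_n$. Suppose $\lim_n\int_{X_n}w_n^q\,d\mu$ and $\lim_n\int_{X_n}w^q\,d\mu$ exist as real numbers and are equal. Then $\lim_n\int_{X_n}(w_n-w)^q\,d\mu=0$. *)

(* Defs.v *)
From HB Require Import structures.
From mathcomp Require Import all_boot all_order all_algebra.
From mathcomp Require Import all_classical all_reals all_analysis.

(* Main.v *)
Require Import Defs.
From HB Require Import structures.
From mathcomp Require Import all_boot all_order all_algebra.
From mathcomp Require Import all_classical all_reals all_analysis.
From mathcomp Require Import lra ring measurable_realfun.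
Import Order.TTheory GRing.Theory Num.Theory.
Local Open Scope classical_set_scope.
Local Open Scope ring_scope.

Lemma ptwise (R : realType) (q s a b k : R) : 0 < q -> 0 < s -> 0 <= b -> b <= a ->
  k = (1 + s) `^ q ->
  (a - b) `^ q + k / (k - 1) * b `^ q <= s `^ q * b `^ q + k / (k - 1) * a `^ q.
Proof.
move=> q0 s0 b0 ba kE.
have a0 : 0 <= a by exact: le_trans ba.
have k1 : 1 < k.
  have e1 : (1:R) `^ q = 1 by rewrite powR1.
  rewrite kE -{1}e1; apply: gt0_ltr_powR => //; rewrite ?nnegrE ?ltrDl //.
  by rewrite addr_ge0 // ltW.
have k10 : 0 < k - 1 by rewrite subr_gt0.
have C0 : 0 <= k / (k - 1) by rewrite divr_ge0 // ltW // (lt_trans ltr01).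
have mono x y : 0 <= x -> x <= y -> x `^ q <= y `^ q.
  by move=> x0 xy; apply: ge0_ler_powR; rewrite ?nnegrE ?(ltW q0) // (le_trans x0).
have Bq0 := powR_ge0 b q; have Aq0 := powR_ge0 a q; have Sq0 := powR_ge0 s q.
set C := k / (k - 1).
set A := a `^ q; set B := b `^ q; set S := s `^ q; set P := (a - b) `^ q.
case: (leP a ((1 + s) * b)) => h.
  have : (a - b) `^ q <= s `^ q * b `^ q.
    rewrite -powRM ?(ltW s0) //; apply: mono; first by rewrite subr_ge0.
    by rewrite lerBlDl; apply: (le_trans h); rewrite mulrDl mul1r addrC.
  have : k / (k - 1) * b `^ q <= k / (k - 1) * a `^ q.
    by apply: ler_wpM2l => //; apply: mono.
  by move=> h1 h2; apply: lerD.
have hP : (a - b) `^ q <= a `^ q by apply: mono; rewrite ?subr_ge0 ?lerBlDr ?lerDl.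
have hk : k * b `^ q <= a `^ q.
  rewrite kE -powRM ?(ltW s0) ?addr_ge0 ?(ltW s0) //; apply: mono; last exact: ltW.
  by rewrite mulr_ge0 // addr_ge0 // ltW.
have e : k / (k - 1) * (a `^ q - b `^ q) - a `^ q = (a `^ q - k * b `^ q) / (k - 1).
  by field; rewrite gt_eqF.
have : 0 <= (a `^ q - k * b `^ q) / (k - 1) by rewrite divr_ge0 ?subr_ge0 // ltW.
rewrite -e mulrBr -/C -/A -/B => hh; have SB : 0 <= S * B by rewrite mulr_ge0.
move: hP; rewrite -/P -/A => hP; clearbody A B S P C; lra.
Qed.
Local Open Scope ereal_scope.

Lemma key d (X : measurableType d) (R : realType)
  (mu : {measure set X -> \bar R}) (q s k : R) (w v : X -> R) (D : set X) :
  (0 < q)%R -> (0 < s)%R -> k = ((1 + s) `^ q)%R ->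
  measurable D -> measurable_fun D w -> measurable_fun D v ->
  (forall x, D x -> 0 <= w x)%R -> (forall x, D x -> w x <= v x)%R ->
  \int[mu]_(x in D) ((v x - w x) `^ q)%:E + (k / (k - 1))%:E * \int[mu]_(x in D) ((w x) `^ q)%:E
  <= (s `^ q)%:E * \int[mu]_(x in D) ((w x) `^ q)%:E + (k / (k - 1))%:E * \int[mu]_(x in D) ((v x) `^ q)%:E.
Proof.
move=> q0 s0 kE mD mw mv w0 wv.
have k1 : (1 < k)%R.
  have e1 : ((1:R) `^ q = 1)%R by rewrite powR1.
  rewrite kE -{1}e1; apply: gt0_ltr_powR => //; rewrite ?nnegrE ?ltrDl //.
  by rewrite addr_ge0 // ltW.
have C0 : (0 <= k / (k - 1))%R by rewrite divr_ge0 // ?subr_ge0 ltW // (lt_trans ltr01).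
have mp (f : X -> R) : measurable_fun D f -> measurable_fun D (fun x => ((f x) `^ q)%:E).
  move=> mf; apply/measurable_EFinP.
  exact: (measurableT_comp (measurable_powR _) mf).
have ge0 (f : X -> R) x : 0 <= ((f x) `^ q)%:E by rewrite lee_fin powR_ge0.
rewrite -!ge0_integralZl_EFin // ?powR_ge0 //; try exact: mp.
rewrite -!ge0_integralD //; try (move=> x _; apply: ge0); try exact: mp;
  try (by apply: measurable_funB); try (move=> x _; rewrite mule_ge0);
  try (apply: measurable_funeM; exact: mp).
apply: ge0_le_integral => //.
- by move=> x _; apply: adde_ge0; rewrite ?lee_fin ?powR_ge0 // mulr_ge0 // powR_ge0.
- apply: emeasurable_funD; first by apply: mp; apply: measurable_funB.
  by apply: measurable_funeM; exact: mp.
- apply: emeasurable_funD; by apply: measurable_funeM; exact: mp.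
move=> x Dx; rewrite -!EFinM -!EFinD lee_fin.
by apply: ptwise => //; [exact: w0|exact: wv]. 
all: try (apply: mp; exact: measurable_funB).
all: try (move=> ? ?); rewrite ?lee_fin ?powR_ge0 //.
Qed.
Lemma aux (R : realType) (U : \bar R) (a b S C : R) : 0 <= U ->
  U + C%:E * a%:E <= S%:E * a%:E + C%:E * b%:E ->
  U \is a fin_num /\ (fine U <= S * a + C * b - C * a)%R.
Proof.
rewrite -!EFinM -EFinD.
case: U => [r| |] //= _.
  by rewrite -EFinD lee_fin => h; split => //; lra.
Qed.

Lemma kgt1 (R : realType) (q s : R) : (0 < q)%R -> (0 < s)%R -> (1 < (1 + s) `^ q)%R.
Proof.
move=> q0 s0; have e1 : ((1:R) `^ q = 1)%R by rewrite powR1.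
rewrite -{1}e1; apply: gt0_ltr_powR => //; rewrite ?nnegrE ?ltrDl //.
by rewrite addr_ge0 // ltW.
Qed.

Local Close Scope ereal_scope.

Theorem lemma5p2 (d : measure_display) (X : measurableType d) (R : realType)
  (mu : probability X R) (q : R) (w : X -> R)
  (Xn : nat -> set X) (wn : nat -> X -> R) :
  0 < q -> q < 1 ->
  measurable_fun setT w -> (forall x, 0 <= w x) ->
  (forall n, measurable (Xn n)) ->
  (forall n, measurable_fun (Xn n) (wn n)) ->
  (forall n x, Xn n x -> 0 < wn n x) ->
  (forall n x, Xn n x -> w x <= wn n x) ->
  (exists L : R,
     (fun n => (\int[mu]_(x in Xn n) ((wn n x) `^ q)%:E)%E) @ \oo --> L%:E /\
     (fun n => (\int[mu]_(x in Xn n) ((w x) `^ q)%:E)%E) @ \oo --> L%:E) ->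
  (fun n => (\int[mu]_(x in Xn n) ((wn n x - w x) `^ q)%:E)%E) @ \oo --> 0%E.
Proof.
Local Open Scope ereal_scope.
move=> q0 q1 mw w0 mX mwn wn0 wnw [L []]; move: L.
set u := fun n => \int[mu]_(x in Xn n) ((wn n x - w x) `^ q)%:E.
set A := fun n => \int[mu]_(x in Xn n) ((w x) `^ q)%:E.
set B := fun n => \int[mu]_(x in Xn n) ((wn n x) `^ q)%:E.
move=> L cB cA.
have kk s : (0 < s)%R -> forall n, u n + ((1+s)`^q / ((1+s)`^q - 1))%:E * A n
    <= (s`^q)%:E * A n + ((1+s)`^q / ((1+s)`^q - 1))%:E * B n.
  move=> s0 n; apply: key => //.
    by apply: (measurable_funS measurableT).
  by move=> x; exact: wnw.
have u0 n : 0 <= u n by apply: integral_ge0 => x _; rewrite lee_fin powR_ge0.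
move/fine_cvgP: cA => [fA cA]; move/fine_cvgP: cB => [fB cB].
move/cvgrPdist_le: cA => cA; move/cvgrPdist_le: cB => cB.
suff : u @ \oo --> (0%R)%:E by [].
apply/fine_cvgP; split.
  near=> n.
  have fa : A n \is a fin_num by near: n; exact: fA.
  have fb : B n \is a fin_num by near: n; exact: fB.
  have := kk 1%R ltr01 n; rewrite -(fineK fa) -(fineK fb).
  by move/(@aux _ _ _ _ _ _ (u0 n)) => [].
apply/cvgrPdist_le => e e0.
set eps := (e / (2 * (`|L| + 2)))%R.
have eps0 : (0 < eps)%R by rewrite divr_gt0 // mulr_gt0 // ltr_wpDl.
set s := (eps `^ (q^-1))%R.
have s0 : (0 < s)%R by rewrite powR_gt0.
have sq : (s `^ q = eps)%R by rewrite /s -powRrM mulVf ?gt_eqF // powRr1 // ltW.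
have k1 := @kgt1 _ _ _ q0 s0.
set k := ((1 + s) `^ q)%R in k1.
set C := (k / (k - 1))%R.
have C0 : (0 <= C)%R by rewrite divr_ge0 // ?subr_ge0 ltW // (lt_trans ltr01).
set del := (e / (4 * (C + 1)))%R.
have del0 : (0 < del)%R by rewrite divr_gt0 // mulr_gt0 // ltr_wpDl.
near=> n.
have fa : A n \is a fin_num by near: n; exact: fA.
have fb : B n \is a fin_num by near: n; exact: fB.
have ha1 : (`|L - (fine \o A) n| <= 1)%R by near: n; exact: cA.
have ha : (`|L - (fine \o A) n| <= del)%R by near: n; exact: cA.
have hb : (`|L - (fine \o B) n| <= del)%R by near: n; exact: cB.
have := kk s s0 n; rewrite -(fineK fa) -(fineK fb).
move/(@aux _ _ _ _ _ _ (u0 n)) => [fu]; rewrite sq -/k -/C => hu.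
rewrite /= sub0r normrN ger0_norm ?fine_ge0 //.
move: ha1 ha hb; rewrite /= !ler_norml => /andP[a1 a2] /andP[a3 a4] /andP[a5 a6].
set a := fine (A n) in a1 a2 a3 a4 hu *; set b := fine (B n) in a5 a6 hu *.
have a0 : (0 <= a)%R by rewrite /a fine_ge0 // integral_ge0 // => x _; rewrite lee_fin powR_ge0.
have hL := ler_norm L.
have h1 : (eps * a <= eps * (`|L| + 2))%R by rewrite ler_wpM2l // ?(ltW eps0) //; lra.
have h2 : (eps * (`|L| + 2) = e / 2)%R.
  by rewrite /eps; field; apply/negP; rewrite gt_eqF // ltr_wpDl.
have h3 : (C * b - C * a <= C * (2 * del))%R by rewrite -mulrBr ler_wpM2l //; lra.
have h4 : (C * (2 * del) = e / 2 - e / (2 * (C + 1)))%R.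
  by rewrite /del; field; apply/negP; rewrite gt_eqF // ltr_wpDl.
have h5 : (0 <= e / (2 * (C + 1)))%R.
  apply: divr_ge0; [exact: ltW | apply: mulr_ge0 => //; exact: addr_ge0].
lra.
Unshelve. all: end_near.
Qed.
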